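(* Let $n > 1$ and let $M$ be a right $R$-module. Then the left $R$-module $M^+$ is $\mathrm{FP}_n$-flat if and only if $M$ is $\mathrm{FP}_n$-injective.
   Context: $R$ is an associative ring with unit. For $n \ge 0$, a (left or right) $R$-module is finitely $n$-presented if there is an exact sequence $F_n \to \cdots \to F_0 \to M \to 0$ with every $F_i$ finitely generated free; $\mathrm{FP}_n$ denotes the class of such modules (on the relevant side). A right (resp. left) $R$-module $N$ is $\mathrm{FP}_n$-injective if $\mathrm{Ext}^1_R(F,N)=0$ for every right (resp. left) $R$-module $F \in \mathrm{FP}_n$. A left $R$-module $M$ is $\mathrm{FP}_n$-flat if $\mathrm{Tor}_1^R(F,M)=0$ for every right $R$-module $F \in \mathrm{FP}_n$. The character module of a module $M$ is $M^+ = \mathrm{Hom}_{\mathbb Z}(M,\mathbb Q/\mathbb Z)$, a module on the opposite side. *)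

(* Defs.v *)
From HB Require Import structures.
From mathcomp Require Import all_boot all_order all_algebra.
Set Implicit Arguments. Unset Strict Implicit. Unset Printing Implicit Defensive.
Import Order.TTheory GRing.Theory Num.Theory.
Local Open Scope ring_scope.

(* The group Q/Z, represented by the half-open interval [0,1) of rat.  *)
Definition frac (x : rat) : rat := x - (Num.floor x)%:~R.

Lemma frac_ge0 x : 0 <= frac x.
Proof. by rewrite /frac subr_ge0 Num.Theory.floor_le. Qed.

Lemma frac_lt1 x : frac x < 1.
Proof. by rewrite /frac ltrBlDr addrC -[1]/(1%:~R) -rmorphD Num.Theory.floorD1_gt. Qed.

Definition QZ := {q : rat | (0 <= q) && (q < 1)}.

Definition qz_of (x : rat) : QZ :=
  exist _ (frac x) (introT andP (conj (frac_ge0 x) (frac_lt1 x))).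
Definition qz0 : QZ := qz_of 0.
Definition qz_add (a b : QZ) : QZ := qz_of (sval a + sval b).

Lemma fracDl x y : frac (frac x + y) = frac (x + y).
Proof.
have -> : frac x + y = (x + y) + (- Num.floor x)%:~R.
  by rewrite /frac rmorphN /= addrAC.
rewrite /frac floorDrz ?intr_int // intrKfloor rmorphD /= opprD addrA.
by rewrite rmorphN /= opprK addrAC subrK.
Qed.
Lemma qz_addC a b : qz_add a b = qz_add b a.
Proof. by apply: val_inj; rewrite /= addrC. Qed.

Lemma qz_addA a b c : qz_add a (qz_add b c) = qz_add (qz_add a b) c.
Proof.
by apply: val_inj => /=; rewrite [sval a + _]addrC !fracDl addrC addrA.
Qed.

Lemma qz_add00 : qz_add qz0 qz0 = qz0.
Proof. by apply: val_inj => /=; rewrite fracDl addrC fracDl. Qed.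

(* Modules.  A left S-module is an [lmodType S]; a right R-module is a  *)
(* left module over the converse ring [R^c] (m . r := r *: m).          *)

(* A finite free partial resolution of length n of a left S-module F:   *)
(*   F_n --A (n-1)--> ... --A 1--> F_1 --A 0--> F_0 --e--> F --> 0      *)
(* with F_i = S^(k i) (row vectors, S acting on the left), the map      *)
(* F_(i+1) -> F_i being v |-> v *m A i, e linear and onto, and the      *)
(* sequence exact at F, F_0, ..., F_(n-1).                              *)
Definition is_free_res (S : pzRingType) (F : lmodType S) (n : nat)
    (k : nat -> nat) (A : forall i, 'M[S]_(k i.+1, k i))
    (e : 'rV[S]_(k 0) -> F) : Prop :=
  [/\ forall (a : S) u v, e (a *: u + v) = a *: e u + e v,
      forall x : F, exists v, e v = x,
      (0 < n)%N -> forall v, e v = 0 <-> exists w, v = w *m A 0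
    & forall j, (j.+1 < n)%N ->
        forall v : 'rV[S]_(k j.+1), v *m A j = 0 <-> exists w, v = w *m A j.+1].

Definition FPn (S : pzRingType) (n : nat) (F : lmodType S) : Prop :=
  exists k A e, @is_free_res S F n k A e.

(* Ext^1_S(F, N) = 0, computed (as usual) from a finite free resolution *)
(* of F: H^1 of  Hom(F_0,N) -> Hom(F_1,N) -> Hom(F_2,N), where          *)
(* Hom(S^k, N) = N^k.  (Only used for F in FP_n with n >= 2, so such   *)
(* resolutions exist; we require the vanishing for every one of them.) *)
Definition ext1_zero (S : pzRingType) (F N : lmodType S) : Prop :=
  forall k A e, @is_free_res S F 2 k A e ->
  forall y : 'I_(k 1%N) -> N,
    (forall r : 'I_(k 2%N), \sum_(p < k 1%N) A 1%N r p *: y p = 0) ->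
    exists x : 'I_(k 0%N) -> N, forall p, y p = \sum_(q < k 0%N) A 0%N p q *: x q.

Definition FPn_injective (S : pzRingType) (n : nat) (N : lmodType S) : Prop :=
  forall F : lmodType S, FPn n F -> ext1_zero F N.

Record lpremod (R : Type) := LPreMod {
  lpm_car :> Type;
  lpm_zero : lpm_car;
  lpm_add : lpm_car -> lpm_car -> lpm_car;
  lpm_act : R -> lpm_car -> lpm_car }.
Arguments lpm_zero {R} l.
Arguments lpm_add {R} l.
Arguments lpm_act {R} l.

(* Tor_1^R(F, X) = 0 for a right R-module F and a left R-module X,      *)
(* computed from a finite free resolution of F: H_1 of                 *)
(*   F_2 (x) X -> F_1 (x) X -> F_0 (x) X,  with R^k (x)_R X = X^k.      *)
Definition tor1_zero (R : pzRingType) (F : lmodType R^c) (X : lpremod R) : Prop :=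
  forall k (A : forall i, 'M[R^c]_(k i.+1, k i)) e, @is_free_res R^c F 2 k A e ->
  forall z : 'I_(k 1%N) -> X,
    (forall q : 'I_(k 0%N),
        \big[lpm_add X/lpm_zero X]_(p < k 1%N) lpm_act X (A 0%N p q : R) (z p)
        = lpm_zero X) ->
    exists w : 'I_(k 2%N) -> X, forall p,
      z p = \big[lpm_add X/lpm_zero X]_(r < k 2%N) lpm_act X (A 1%N r p : R) (w r).

Definition FPn_flat (R : pzRingType) (n : nat) (X : lpremod R) : Prop :=
  forall F : lmodType R^c, FPn n F -> tor1_zero F X.

(* The character module M^+ = Hom_Z(M, Q/Z) of a right R-module M, a    *)
(* left R-module via (r f)(m) = f(m r).                                 *)
Definition qz_additive (M : zmodType) (f : M -> QZ) : Prop :=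
  forall a b, f (a + b) = qz_add (f a) (f b).

Definition charcar (M : zmodType) := {f : M -> QZ | qz_additive f}.

Definition char_zero (M : zmodType) : charcar M :=
  exist (@qz_additive M) (fun _ => qz0) (fun _ _ => esym qz_add00).

Lemma char_add_proof (M : zmodType) (f g : charcar M) :
  qz_additive (fun m => qz_add (sval f m) (sval g m)).
Proof.
case: f g => f hf [g hg] a b /=; rewrite hf hg.
rewrite -!qz_addA; congr qz_add; rewrite !qz_addA; congr qz_add.
exact: qz_addC.
Qed.

Definition char_add (M : zmodType) (f g : charcar M) : charcar M :=
  exist (@qz_additive M) _ (char_add_proof f g).

Lemma char_act_proof (R : pzRingType) (M : lmodType R^c) (r : R) (f : charcar M) :
  qz_additive (fun m : M => sval f ((r : R^c) *: m)).
Proof. by case: f => f hf a b /=; rewrite scalerDr hf. Qed.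

Definition char_act (R : pzRingType) (M : lmodType R^c) (r : R) (f : charcar M) :
  charcar M := exist (@qz_additive M) _ (char_act_proof r f).

Definition charmod (R : pzRingType) (M : lmodType R^c) : lpremod R :=
  @LPreMod R (charcar M) (char_zero M) (@char_add M) (@char_act R M).

(* Main.v *)
Require Import Defs.
From HB Require Import structures.
From mathcomp Require Import all_boot all_order all_algebra.
From mathcomp Require Import boolp classical_sets lra.
Set Implicit Arguments. Unset Strict Implicit. Unset Printing Implicit Defensive.
Import Order.TTheory GRing.Theory Num.Theory.
Local Open Scope ring_scope.

Lemma frac_id (x : rat) : 0 <= x < 1 -> Defs.frac x = x.
Proof. move=> hx; rewrite /Defs.frac; have -> : Num.floor x = 0 by apply: floor_def; rewrite add0r. by rewrite subr0. Qed.

Lemma qz_of_val (a : QZ) : qz_of (sval a) = a.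
Proof. apply: val_inj => /=; apply: frac_id; exact: (svalP a). Qed.

Definition qz_opp (a : QZ) : QZ := qz_of (- sval a).

Lemma qz_add0 : left_id qz0 qz_add.
Proof. move=> a; apply: val_inj => /=; rewrite fracDl add0r; apply: frac_id; exact: (svalP a). Qed.

Lemma qz_addN : left_inverse qz0 qz_opp qz_add.
Proof. by move=> a; apply: val_inj => /=; rewrite fracDl addNr. Qed.

HB.instance Definition _ := Choice.on QZ.
HB.instance Definition _ := GRing.isZmodule.Build QZ qz_addA qz_addC qz_add0 qz_addN.

Lemma qz_addE (a b : QZ) : qz_add a b = a + b. Proof. by []. Qed.
Lemma qz0E : qz0 = 0 :> QZ. Proof. by []. Qed.

Section Grp.
Variable G : zmodType.
Implicit Types (H : G -> Prop) (f : G -> QZ).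

Definition subgrp H := H 0 /\ forall a b, H a -> H b -> H (a - b).
Definition addon H f := forall a b, H a -> H b -> f (a + b) = f a + f b.

Lemma sgN H a : subgrp H -> H a -> H (- a).
Proof. by case=> h0 hB ha; rewrite -sub0r; apply: hB. Qed.
Lemma sgD H a b : subgrp H -> H a -> H b -> H (a + b).
Proof. move=> hH ha hb; rewrite -[b]opprK; apply: hH.2 => //; exact: sgN. Qed.
Lemma sgMn H a n : subgrp H -> H a -> H (a *+ n).
Proof. move=> hH ha; elim: n => [|n IH]; first by rewrite mulr0n; case: hH.
by rewrite mulrS; apply: sgD. Qed.
Lemma sgMz H a k : subgrp H -> H a -> H (a *~ k).
Proof. move=> hH ha; case: k => n; first exact: sgMn.
rewrite NegzE mulrNz; apply: sgN => //; exact: sgMn. Qed.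

Lemma ao0 H f : subgrp H -> addon H f -> f 0 = 0.
Proof. move=> [h0 _] hf; have e := hf 0 0 h0 h0; rewrite addr0 in e. by rewrite -(subrr (f 0)) {2}e addrK. Qed.
Lemma aoN H f a : subgrp H -> addon H f -> H a -> f (- a) = - f a.
Proof. move=> hH hf ha; have e := hf _ _ (sgN hH ha) ha; rewrite addNr (ao0 hH hf) in e.
by apply/eqP; rewrite -addr_eq0 -e. Qed.
Lemma aoB H f a b : subgrp H -> addon H f -> H a -> H b -> f (a - b) = f a - f b.
Proof. move=> hH hf ha hb; rewrite (hf _ _ ha (sgN hH hb)) (aoN hH hf hb) //. Qed.
Lemma aoMn H f a n : subgrp H -> addon H f -> H a -> f (a *+ n) = f a *+ n.
Proof. move=> hH hf ha; elim: n => [|n IH]; first by rewrite !mulr0n (ao0 hH hf).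
by rewrite !mulrS hf ?IH //; apply: sgMn. Qed.
Lemma aoMz H f a k : subgrp H -> addon H f -> H a -> f (a *~ k) = f a *~ k.
Proof. move=> hH hf ha; case: k => n.
  exact: (aoMn n hH hf ha).
have h1 := aoMn n.+1 hH hf ha.
rewrite !NegzE !mulrNz (aoN hH hf (sgMn n.+1 hH ha)) h1 //. Qed.

End Grp.

Lemma frac0 : Defs.frac 0 = 0.
Proof. by rewrite /Defs.frac floor0 subr0. Qed.
Lemma qz_ofD a b : qz_of (a + b) = qz_of a + qz_of b.
Proof. apply: val_inj; rewrite -qz_addE /=.
have e1 := fracDl a (Defs.frac b). have e2 := fracDl b a.
rewrite e1 [a + Defs.frac b]addrC e2 addrC //. Qed.
Lemma qz_of0 : qz_of 0 = 0. Proof. by []. Qed.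
Lemma qz_ofMn a n : qz_of (a *+ n) = qz_of a *+ n.
Proof. elim: n => [|n IH]; first by rewrite !mulr0n. by rewrite !mulrS qz_ofD IH. Qed.
Lemma qz_of1 : qz_of 1 = 0.
Proof. apply: val_inj => /=; by rewrite /Defs.frac floor1 subrr floor0 subr0. Qed.
Lemma qz_ofN0 (a : rat) : 0 < a < 1 -> qz_of a != 0.
Proof. move=> /andP[a0 a1]; apply/eqP => /(congr1 sval) /=; rewrite frac_id ?frac0.
  by move=> e; move: a0; rewrite e ltxx. by rewrite ltW. Qed.

Lemma exists_c (G : zmodType) (H : G -> Prop) f x : subgrp H -> addon H f ->
  exists c : QZ, (forall k : int, H (x *~ k) -> c *~ k = f (x *~ k)) /\
                 (~ H x -> (forall a, H a -> f a = 0) -> c != 0).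
Proof.
move=> hH hf.
have [hex|hno] := pselect (exists n : nat, (0 < n)%N && `[< H (x *+ n) >]).
- case: (ex_minnP hex) => m /andP[m0 /asboolP hm] hmin.
  pose r := sval (f (x *+ m)).
  have mR : m%:R != 0 :> rat by rewrite pnatr_eq0 -lt0n.
  exists (qz_of ((r + 1) / m%:R)).
  have cm : qz_of ((r + 1) / m%:R) *+ m = f (x *+ m).
    by rewrite -qz_ofMn -[_ *+ m]mulr_natr divfK // qz_ofD qz_of1 addr0 /r qz_of_val.
  split.
  + move=> k hk.
    have mz : (0 < (m:int))%R by rewrite ltz_nat.
    have mz0 : (m:int) != 0 by rewrite eqz_nat -lt0n.
    have [q [rr [ek rr0 rrm]]] : exists q rr : int, [/\ k = q * m + rr, 0 <= rr & rr < m].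
      by exists (k %/ m)%Z, (k %% m)%Z; split; [exact: divz_eq | exact: modz_ge0 | exact: ltz_pmod].
    have hr : H (x *~ rr).
      have -> : x *~ rr = x *~ k - (x *+ m) *~ q.
        by rewrite ek mulrzDr -mulrzA_C -pmulrn addrAC subrr add0r.
      by apply: hH.2 => //; apply: sgMz.
    have rr_eq : rr = 0.
      apply/eqP; apply/negPn/negP => rrn0.
      have : (m <= `|rr|%N)%N.
        apply: hmin; apply/andP; split.
          by rewrite absz_gt0.
        by apply/asboolP; rewrite pmulrn gez0_abs.
      by rewrite -(gez0_abs rr0) ltz_nat in rrm; rewrite leqNgt rrm.
    rewrite ek rr_eq addr0 -!mulrzA_C -!pmulrn cm (aoMz _ hH hf hm) //.
  + move=> hnx hf0.
    have r0 : r = 0 by rewrite /r (hf0 _ hm) /= frac0.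
    have m1 : (1 < m)%N.
      rewrite ltn_neqAle eq_sym m0 andbT; apply/eqP => em.
      by apply: hnx; move: hm; rewrite em mulr1n.
    apply: qz_ofN0; rewrite r0 add0r mul1r invr_gt0 ltr0n m0 /=.
    by rewrite invf_lt1 ?ltr0n // ltr1n.
- exists (qz_of (1/2)); split.
  + case=> n hk.
      case: n hk => [|n] hk; first by rewrite !mulr0z (ao0 hH hf).
      by exfalso; apply: hno; exists n.+1; apply/andP; split => //; apply/asboolP.
    exfalso; apply: hno; exists n.+1; apply/andP; split => //; apply/asboolP.
    by have := sgN hH hk; rewrite NegzE mulrNz opprK.
  + by move=> _ _; apply: qz_ofN0; lra.
Qed.

Lemma step_ext (G : zmodType) (H : G -> Prop) f x c : subgrp H -> addon H f ->
  (forall k : int, H (x *~ k) -> c *~ k = f (x *~ k)) ->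
  exists H' f', [/\ subgrp H', addon H' f', (forall a, H a -> H' a /\ f' a = f a),
                   H' x & f' x = c].
Proof.
move=> hH hf hc.
have cons : forall h k h' k', H h -> H h' -> h + x *~ k = h' + x *~ k' ->
    f h + c *~ k = f h' + c *~ k'.
  move=> h k h' k' hh hh' e.
  have eh' : h' = h + (x *~ k - x *~ k') by rewrite addrA e addrK.
  have hd : x *~ (k - k') = h' - h by rewrite mulrzBr eh' [RHS]addrC addKr.
  have E : c *~ k - c *~ k' = f h' - f h.
    have hx : H (x *~ (k - k')) by rewrite hd; apply: hH.2.
    by rewrite -mulrzBr (hc _ hx) hd (aoB hH hf).
  have -> : f h' = f h + (c *~ k - c *~ k') by rewrite E addrC subrK.
  by rewrite -addrA subrK.
pose H' := fun y => exists hk : G * int, H hk.1 /\ y = hk.1 + x *~ hk.2.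
pose f' := fun y => match pselect (H' y) with
  | left hy => let hk := sval (cid hy) in f hk.1 + c *~ hk.2
  | right _ => 0 end.
have f'E : forall h k, H h -> f' (h + x *~ k) = f h + c *~ k.
  move=> h k hh; rewrite /f'; case: pselect => [hy|hn]; last first.
    by exfalso; apply: hn; exists (h, k).
  case: (cid hy) => [[h1 k1] [/= hh1 e]] /=.
  by apply: cons => //; rewrite -e.
have hH' : subgrp H'.
  split; first by exists (0, 0) => /=; split; [case: hH | rewrite mulr0z addr0].
  move=> a b [[h k] [/= hh ->]] [[h' k'] [/= hh' ->]].
  exists (h - h', k - k') => /=; split; first by apply: hH.2.
  by rewrite mulrzBr opprD addrACA.
exists H', f'; split => //.
- move=> a b [[h k] [/= hh ->]] [[h' k'] [/= hh' ->]].
  rewrite addrACA -mulrzDr !f'E ?hf //; first by rewrite mulrzDr addrACA.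
  exact: sgD.
- move=> a ha; split; first by exists (a, 0) => /=; rewrite mulr0z addr0.
  by have := f'E a 0 ha; rewrite !mulr0z !addr0.
- by exists (0, 1) => /=; split; [case: hH | rewrite add0r].
- have := f'E 0 1 hH.1; rewrite add0r (ao0 hH hf) add0r => ->; by [].
Qed.

Lemma ext_char (G : zmodType) (H : G -> Prop) f : subgrp H -> addon H f ->
  exists g : G -> QZ, (forall a b, g (a + b) = g a + g b) /\ (forall a, H a -> g a = f a).
Proof.
move=> hH hf.
pose P := ((G -> Prop) * (G -> QZ))%type.
pose good (p : P) := subgrp p.1 /\ addon p.1 p.2.
pose le (p q : P) := forall a, p.1 a -> q.1 a /\ p.2 a = q.2 a.
have le_trans : forall p q r, le p q -> le q r -> le p r.
  move=> p q r hpq hqr a ha; have [hq e1] := hpq a ha; have [hr e2] := hqr a hq.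
  by split => //; rewrite e1.
pose T := {p : P | good p /\ le (H, f) p}.
pose R := fun s t : T => `[< le (sval s) (sval t) >].
have t0 : T := exist _ (H, f) (conj (conj hH hf) (fun a ha => conj ha erefl)).
have [m hm] : exists t, premaximal R t.
  apply: (ZL_preorder t0).
  - by move=> t; apply/asboolP => a ha.
  - by move=> r s t /asboolP h1 /asboolP h2; apply/asboolP; apply: le_trans h1 h2.
  move=> A hA.
  pose B (p : P) := p = (H, f) \/ exists t, A t /\ sval t = p.
  have Bgood : forall p, B p -> good p /\ le (H, f) p.
    move=> p [->|[t [_ <-]]]; last exact: (svalP t).
    by split; [split | move=> a ha].
  have Bchain : forall p q, B p -> B q -> le p q \/ le q p.
    move=> p q hp hq; case: hp => [->|[s [hs <-]]]; first by left; case: (Bgood q hq).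
    case: hq => [->|[t [ht <-]]]; first by right; case: (Bgood _ (or_intror (ex_intro _ s (conj hs erefl)))).
    by case: (hA s t hs ht) => /asboolP h; [left|right].
  have Bcommon : forall p q, B p -> B q -> exists r, [/\ B r, le p r & le q r].
    move=> p q hp hq; case: (Bchain p q hp hq) => h.
      by exists q; split => // a ha.
    by exists p; split => // a ha.
  pose U a := exists p, B p /\ p.1 a.
  pose fU a := match pselect (U a) with
    | left h => (sval (cid h)).2 a
    | right _ => 0 end.
  have key : forall p a, B p -> p.1 a -> fU a = p.2 a.
    move=> p a hp ha; rewrite /fU; case: pselect => [h|hn]; last first.
      by exfalso; apply: hn; exists p.
    case: (cid h) => q [hq qa] /=.
    case: (Bchain p q hp hq) => h'; first by rewrite (h' a ha).2.
    by rewrite (h' a qa).2.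
  have gU : good (U, fU).
    split.
      split; first by exists (H, f); split; [left | case: hH].
      move=> a b [p [hp pa]] [q [hq qb]].
      have [r [hr pr qr]] := Bcommon p q hp hq.
      exists r; split => //; have [[[_ hr2] _] _] := Bgood r hr.
      by apply: hr2; [exact: (pr a pa).1 | exact: (qr b qb).1].
    move=> a b [p [hp pa]] [q [hq qb]].
    have [r [hr pr qr]] := Bcommon p q hp hq.
    have ra := (pr a pa).1; have rb := (qr b qb).1.
    have [[hr1 hr2] _] := Bgood r hr.
    have rab : r.1 (a + b) := sgD hr1 ra rb.
    rewrite /= (key r a hr ra) (key r b hr rb) (key r (a + b) hr rab).
    exact: hr2.
  have leU : forall p, B p -> le p (U, fU).
    move=> p hp a ha; split; first by exists p.
    by rewrite /= (key p a hp ha).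
  exists (exist _ (U, fU) (conj gU (leU _ (or_introl erefl)))).
  move=> s hs; apply/asboolP; apply: leU; right; by exists s.
have [gm lm] := svalP m.
have allm : forall a, (sval m).1 a.
  move=> a; apply: contrapT => na.
  have [c [hc _]] := exists_c a gm.1 gm.2.
  have [H' [f' [s' a' ext H'a _]]] := step_ext gm.1 gm.2 hc.
  have g' : good (H', f') by [].
  have l' : le (sval m) (H', f') by move=> b hb; have [? ?] := ext b hb; split.
  pose t' : T := exist _ (H', f') (conj g' (le_trans _ _ _ lm l')).
  have hR : R m t' by apply/asboolP.
  by have /asboolP := hm t' hR => /(_ a H'a) [].
exists (sval m).2; split.
  by move=> a b; apply: gm.2; apply: allm.
by move=> a ha; exact: (esym (lm a ha).2).
Qed.

Lemma sep_char (G : zmodType) (H : G -> Prop) y : subgrp H -> ~ H y ->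
  exists g : G -> QZ, [/\ forall a b, g (a + b) = g a + g b,
                         forall a, H a -> g a = 0 & g y != 0].
Proof.
move=> hH ny.
have hf : addon H (fun _ => 0) by move=> *; rewrite addr0.
have [c [hc hne]] := exists_c y hH hf.
have [H' [f' [s' a' ext H'y f'y]]] := step_ext hH hf hc.
have [g [ga gext]] := ext_char s' a'.
exists g; split => //.
  by move=> a ha; have [h1 h2] := ext a ha; rewrite (gext a h1) h2.
by rewrite (gext y H'y) f'y; apply: hne.
Qed.

Lemma factor (G1 G2 : zmodType) (phi : G1 -> G2) (z : G1 -> QZ) :
  (forall a b, phi (a - b) = phi a - phi b) -> (forall a b, z (a + b) = z a + z b) ->
  (forall a, phi a = 0 -> z a = 0) ->
  exists g : G2 -> QZ, (forall a b, g (a + b) = g a + g b) /\ forall a, g (phi a) = z a.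
Proof.
move=> phiB zD zk.
have phi0 : phi 0 = 0 by rewrite -(subrr 0) phiB subrr.
have phiN : forall b, phi (- b) = - phi b by move=> b; rewrite -sub0r phiB phi0 sub0r.
have phiD : forall a b, phi (a + b) = phi a + phi b.
  by move=> a b; rewrite -{1}[b]opprK phiB phiN opprK.
have sT : subgrp (fun _ : G1 => True) by split.
have zB : forall a b, z (a - b) = z a - z b by move=> a b; apply: (aoB sT).
pose H v := exists a, v = phi a.
pose f v := match pselect (H v) with left h => z (sval (cid h)) | right _ => 0 end.
have fE : forall a, f (phi a) = z a.
  move=> a; rewrite /f; case: pselect => [h|hn]; last by exfalso; apply: hn; exists a.
  case: (cid h) => a' e /=; apply/eqP; rewrite -subr_eq0 -zB; apply/eqP; apply: zk.
  by rewrite phiB e subrr.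
have hH : subgrp H.
  split; first by exists 0.
  by move=> _ _ [a ->] [b ->]; exists (a - b); rewrite phiB.
have hf : addon H f by move=> _ _ [a ->] [b ->]; rewrite -phiD !fE.
have [g [ga gext]] := ext_char hH hf.
exists g; split => // a; rewrite gext ?fE //; by exists a.
Qed.

Lemma charcar_eq (M : zmodType) (a b : charcar M) : sval a = sval b -> a = b.
Proof.
case: a b => fa pa [fb pb] /= e; subst fb; congr exist; exact: Prop_irrelevance.
Qed.

Lemma chD (M : zmodType) (f : charcar M) a b : sval f (a + b) = sval f a + sval f b.
Proof. exact: (svalP f). Qed.

Lemma addfun0 (G : zmodType) (g : G -> QZ) : (forall a b, g (a + b) = g a + g b) -> g 0 = 0.
Proof. move=> gD; have sT : subgrp (fun _ : G => True) by split. exact: (ao0 sT). Qed.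

Lemma addfun_sum (G : zmodType) (g : G -> QZ) (I : Type) (r : seq I) (P : pred I) (v : I -> G) :
  (forall a b, g (a + b) = g a + g b) ->
  g (\sum_(i <- r | P i) v i) = \sum_(i <- r | P i) g (v i).
Proof. move=> gD; exact: (big_morph g gD (addfun0 gD)). Qed.

Lemma ch0 (M : zmodType) (f : charcar M) : sval f 0 = 0.
Proof. exact: (addfun0 (chD f)). Qed.

Lemma chsum (M : zmodType) (f : charcar M) (I : Type) (r : seq I) (P : pred I) (v : I -> M) :
  sval f (\sum_(i <- r | P i) v i) = \sum_(i <- r | P i) sval f (v i).
Proof. exact: addfun_sum (chD f). Qed.

Lemma bigchar (M : zmodType) k (F : 'I_k -> charcar M) m :
  sval (\big[@char_add M/char_zero M]_(i < k) F i) m = \sum_(i < k) sval (F i) m.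
Proof.
apply: (big_rec2 (fun (y1 : charcar M) (y2 : QZ) => sval y1 m = y2)) => //.
by move=> i y1 y2 _ <-.
Qed.

Definition delta (V : zmodType) k (p : 'I_k) (m : V) : {ffun 'I_k -> V} :=
  [ffun i => if i == p then m else 0].

Lemma deltaD (V : zmodType) k (p : 'I_k) (a b : V) : delta p (a + b) = delta p a + delta p b.
Proof. apply/ffunP => i; rewrite !ffunE; case: (i == p) => //; by rewrite addr0. Qed.

Lemma sum_delta (V : zmodType) k (v : 'I_k -> V) : \sum_i delta i (v i) = [ffun i => v i].
Proof.
apply/ffunP => i; rewrite sum_ffunE ffunE (bigD1 i) //= ffunE eqxx big1 ?addr0 //.
by move=> j /negbTE hj; rewrite ffunE eq_sym hj.
Qed.

Lemma sum_scale_delta (S : pzRingType) (V : lmodType S) k (a : 'I_k -> S) p (m : V) :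
  \sum_j a j *: (delta p m) j = a p *: m.
Proof.
rewrite (bigD1 p) //= ffunE eqxx big1 ?addr0 //.
by move=> j /negbTE hj; rewrite ffunE hj scaler0.
Qed.

Lemma Z_delta (V : zmodType) k (z : 'I_k -> charcar V) p m :
  \sum_j sval (z j) (delta p m j) = sval (z p) m.
Proof.
rewrite (bigD1 p) //= ffunE eqxx big1 ?addr0 //.
by move=> j /negbTE hj; rewrite ffunE hj ch0.
Qed.

Theorem proposition3p6 (R : pzRingType) (n : nat) (M : lmodType R^c) :
  (1 < n)%N -> (FPn_flat n (charmod M) <-> FPn_injective n M).
Proof.
move=> _; split.
- move=> hfl F hF k A e hres y hy.
  have htor := hfl F hF k A e hres.
  apply: contrapT => hno.
  pose d0 (x : 'I_(k 0%N) -> M) : {ffun 'I_(k 1%N) -> M} :=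
    [ffun p => \sum_q A 0%N p q *: x q].
  pose H v := exists x, v = d0 x.
  pose Y : {ffun 'I_(k 1%N) -> M} := [ffun p => y p].
  have nY : ~ H Y.
    move=> [x hx]; apply: hno; exists x => p.
    by have := congr1 (fun g : {ffun 'I_(k 1%N) -> M} => g p) hx; rewrite !ffunE.
  have hH : subgrp H.
    split.
      exists (fun _ => 0); apply/ffunP => p; rewrite !ffunE big1 // => q _.
      by rewrite scaler0.
    move=> _ _ [x ->] [x' ->]; exists (fun q => x q - x' q).
    apply/ffunP => p; rewrite !ffunE -sumrB; apply: eq_bigr => q _.
    by rewrite scalerBr.
  have [Z [ZD ZH ZY]] := sep_char hH nY.
  have zP : forall p, qz_additive (fun m : M => Z (delta p m)).
    by move=> p a b; rewrite deltaD ZD.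
  pose z p : charcar M := exist _ (fun m => Z (delta p m)) (zP p).
  have hz : forall q, \big[@char_add M/char_zero M]_(p < k 1%N)
                        char_act (A 0%N p q : R) (z p) = char_zero M.
    move=> q; apply: charcar_eq; apply: funext => m; rewrite bigchar /=.
    rewrite -addfun_sum //; apply: ZH.
    exists (fun q' => delta q m q'); apply/ffunP => p.
    rewrite sum_ffunE ffunE.
    rewrite (bigD1 p) //= ffunE eqxx big1 ?addr0; last first.
      by move=> j /negbTE hj; rewrite ffunE eq_sym hj.
    by rewrite sum_scale_delta.
  have [w hw] := htor z hz.
  move/eqP: ZY; apply.
  rewrite /Y -(sum_delta y) addfun_sum //.
  transitivity (\sum_(p < k 1%N) sval (z p) (y p)); first by [].
  under eq_bigr => p _ do rewrite hw bigchar /=.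
  rewrite exchange_big /= big1 // => r _.
  by rewrite -addfun_sum ?hy ?ch0 //; apply: chD.
- move=> hinj F hF k A e hres z hz.
  have hext := hinj F hF k A e hres.
  pose phi (y : {ffun 'I_(k 1%N) -> M}) : {ffun 'I_(k 2%N) -> M} :=
    [ffun r => \sum_p A 1%N r p *: y p].
  pose Z (y : {ffun 'I_(k 1%N) -> M}) : QZ := \sum_p sval (z p) (y p).
  have phiB : forall a b, phi (a - b) = phi a - phi b.
    move=> a b; apply/ffunP => r; rewrite !ffunE -sumrB; apply: eq_bigr => p _.
    by rewrite !ffunE scalerBr.
  have ZD : forall a b, Z (a + b) = Z a + Z b.
    move=> a b; rewrite /Z -big_split; apply: eq_bigr => p _.
    by rewrite ffunE chD.
  have Zk : forall a, phi a = 0 -> Z a = 0.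
    move=> a ha.
    have [x hx] : exists x, forall p, a p = \sum_q A 0%N p q *: x q.
      apply: (hext (fun p => a p)) => r.
      by have := congr1 (fun g : {ffun 'I_(k 2%N) -> M} => g r) ha; rewrite !ffunE.
    rewrite /Z; under eq_bigr => p _ do rewrite hx chsum.
    rewrite exchange_big /= big1 // => q _.
    have := congr1 (fun f : charcar M => sval f (x q)) (hz q).
    by rewrite bigchar.
  have [g [gD gphi]] := factor phiB ZD Zk.
  have wP : forall r, qz_additive (fun m : M => g (delta r m)).
    by move=> r a b; rewrite deltaD gD.
  exists (fun r => exist _ (fun m => g (delta r m)) (wP r)) => p.
  apply: charcar_eq; apply: funext => m; rewrite bigchar /=.
  rewrite -addfun_sum //.
  have -> : \sum_(i < k 2%N) delta i (A 1%N i p *: m) = phi (delta p m).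
    apply/ffunP => r; rewrite sum_ffunE ffunE.
    rewrite (bigD1 r) //= ffunE eqxx big1 ?addr0; last first.
      by move=> j /negbTE hj; rewrite ffunE eq_sym hj.
    by rewrite sum_scale_delta.
  by rewrite gphi /Z Z_delta.
Qed.
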